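(* Let $n\ge3$, let $g$ be the constant contravariant metric on $\mathbb R^n$ with $g^{ij}=\delta^{i,n+1-j}$, and for $k=1,\dots,n-2$ let $X_{(k)}=\sum_{i=1}^{n-k}(n-k+1-2i)\,u^{i+k}\partial_{u^i}$. Then for all $k$ and all $\alpha\ge0$: (1) $\mathcal L_{X_{(k)}}g=0$; (2) $\mathcal L_{X_{(k)}}\mu^{(n;\alpha)}=p_{[n,k,\alpha]}\,\mu^{(n;\alpha+k)}$; (3) for every $m\ge1$, $\mathcal L^m_{X_{(k)}}\mu^{(n;\alpha)}=\Big(\prod_{s=0}^{m-1}(p_{[n,k,\alpha]}-2ks)\Big)\mu^{(n;\alpha+mk)}$, where $p_{[n,k,\alpha]}=3k+1-n-2\alpha$.
   Context: $\mathcal L$ denotes the Lie derivative (acting on symmetric bivectors). For integers $n\ge1$, $k\ge0$ the symmetric bivector $\mu^{(n;k)}$ has components $\mu^{(n;k)ij}=[3(i+j)-2(n+2-k)]\,u^{i+j-1+k}$, $i,j=1,\dots,n$, with the convention $u^\beta\equiv0$ for $\beta>n$ (so $\mu^{(n;k)}=0$ for $k>n-2$). *)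

(* Defs.v *)
From HB Require Import structures.
From mathcomp Require Import all_boot all_order all_algebra.
From mathcomp Require Import reals.
From mathcomp Require Import mpoly.
Set Implicit Arguments. Unset Strict Implicit. Unset Printing Implicit Defensive.
Import Order.TTheory GRing.Theory Num.Theory.
Local Open Scope ring_scope.

Section Defs.
Variables (R : realType) (n : nat).

(* Fields on R^n with polynomial components in the coordinates u^1..u^n;
   index i : 'I_n stands for the 1-based index i+1. *)
Definition field := {mpoly R[n]}.
Definition vfield := 'I_n -> field.
Definition bivector := 'M[field]_n.

(* coordinate u^beta (1-based), with u^beta = 0 outside 1..n *)
Definition ucoord (beta : nat) : field :=
  if (0 < beta)%N then
    (if insub beta.-1 is Some i then 'X_(i : 'I_n) else 0)
  else 0.

Definition lie (X : vfield) (P : bivector) : bivector :=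
  \matrix_(i, j) \sum_(l < n)
     (X l * mderiv l (P i j) - P l j * mderiv l (X i) - P i l * mderiv l (X j)).

Definition gmetric : bivector :=
  \matrix_(i, j) (if (i.+1 + j.+1 == n.+1)%N then 1 else 0).

Definition mu (k : nat) : bivector :=
  \matrix_(i, j)
    ((3 * (i.+1 + j.+1)%:Z - 2 * ((n + 2)%:Z - k%:Z))%:~R
       * ucoord (i.+1 + j.+1 - 1 + k)).

Definition Xk (k : nat) : vfield := fun i =>
  if (i.+1 <= n - k)%N
  then ((n%:Z - k%:Z + 1 - 2 * (i.+1)%:Z)%:~R * ucoord (i.+1 + k))
  else 0.

End Defs.
Arguments Xk : clear implicits.

Definition pnka (n k alpha : nat) : int :=
  3 * k%:Z + 1 - n%:Z - 2 * alpha%:Z.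

(* Main.v *)
Require Import Defs.
From HB Require Import structures.
From mathcomp Require Import all_boot all_order all_algebra.
From mathcomp Require Import reals.
From mathcomp Require Import mpoly.
From mathcomp Require Import ring zify.
Import Order.TTheory GRing.Theory Num.Theory.
Local Open Scope ring_scope.
Set Implicit Arguments. Unset Strict Implicit.

Section H.
Variables (R : realType) (n : nat).
Local Notation F := (field R n).

Lemma mderivX1 (i l : 'I_n) : mderiv l ('X_i : F) = (i == l)%:R.
Proof.
rewrite mderivX mnm1E; case: eqP => [->|ne].
  by rewrite -{1}(add0m U_(l)%MM) addmK mpolyX0 scale1r.
by rewrite scale0r.
Qed.

Lemma mderiv_u (l : 'I_n) b : mderiv l (ucoord R n b) = (b == l.+1)%:R.
Proof.
rewrite /ucoord; case: b => [|b] /=; first by rewrite mderiv0.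
case: insubP => [i _ /= vi|]; first by rewrite mderivX1 -vi eqSS -(inj_eq val_inj).
rewrite mderiv0 -ltnNge => hb; case: eqP => // -[E]; move: hb; rewrite E ltnNge.
by rewrite ltn_ord.
Qed.

Lemma ucoord0 b : (n < b)%N -> ucoord R n b = 0.
Proof.
rewrite /ucoord; case: b => [|b] //= hb.
by case: insubP => [i _ /= vi|//]; move: (ltn_ord i); rewrite vi => ?; lia.
Qed.

Lemma mderivMz (l : 'I_n) (z : int) (p : F) : mderiv l (z%:~R * p) = z%:~R * mderiv l p.
Proof. by rewrite !mulrzl raddfMz. Qed.

Lemma sum_du (G : nat -> F) b :
  \sum_(l < n) G l * mderiv l (ucoord R n b) = if (0 < b <= n)%N then G b.-1 else 0.
Proof.
under eq_bigr do rewrite mderiv_u.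
case: ifP => hb.
  have hb' : (b.-1 < n)%N by lia.
  rewrite (bigD1 (Ordinal hb')) //= big1 ?addr0.
    by rewrite prednK ?eqxx ?mulr1 //; lia.
  move=> l hl; case: eqP => [E|]; last by rewrite mulr0.
  by case/eqP: hl; apply/val_inj => /=; rewrite E.
rewrite big1 // => l _; case: eqP => [E|]; last by rewrite mulr0.
by move: hb; rewrite E ltn_ord.
Qed.

End H.

Section M.
Variables (R : realType) (n k : nat).
Hypotheses (hn : (3 <= n)%N) (hk1 : (1 <= k)%N) (hk2 : (k <= n - 2)%N).
Local Notation F := (field R n).

Definition eX (m:nat) : int := n%:Z - k%:Z + 1 - 2 * (m.+1)%:Z.
Definition Xn m : F := if (m.+1 <= n-k)%N then (eX m)%:~R * ucoord R n (m.+1+k) else 0.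
Definition cm (al a b : nat) : int := 3*(a.+1+b.+1)%:Z - 2*((n+2)%:Z - al%:Z).
Definition mun al a b : F := (cm al a b)%:~R * ucoord R n (a.+1+b.+1-1+al).
Lemma XkE (l : 'I_n) : Xk R n k l = Xn l. Proof. by []. Qed.
Lemma muE al (i j : 'I_n) : mu R n al i j = mun al i j. Proof. by rewrite mxE. Qed.

Lemma lie_mu_entry al (i j : 'I_n) :
  lie (Xk R n k) (mu R n al) i j = (pnka n k al)%:~R * mu R n (al + k) i j.
Proof.
rewrite [lie _ _ _ _]mxE !sumrB muE.
under eq_bigr do rewrite /mun mderivMz mulrCA XkE.
rewrite -mulr_sumr (sum_du (fun m => Xn m)).
have T2 : forall (i j : 'I_n), \sum_(l < n) mu R n al l j * mderiv l (Xk R n k i) =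
   if (i.+1 <= n-k)%N then (eX i)%:~R * mun al (i+k) j else 0.
  move=> i' j'; rewrite XkE /Xn; case: ifP => hi; last first.
    by rewrite big1 // => l _; rewrite mderiv0 mulr0.
  under eq_bigr do rewrite mderivMz mulrCA muE.
  rewrite -mulr_sumr (sum_du (fun m => mun al m j')) ifT; last by lia.
  by rewrite addSn.
have T3 : forall (i j : 'I_n), \sum_(l < n) mu R n al i l * mderiv l (Xk R n k j) =
   if (j.+1 <= n-k)%N then (eX j)%:~R * mun al i (j+k) else 0.
  move=> i' j'; rewrite XkE /Xn; case: ifP => hi; last first.
    by rewrite big1 // => l _; rewrite mderiv0 mulr0.
  under eq_bigr do rewrite mderivMz mulrCA muE.
  rewrite -mulr_sumr (sum_du (fun m => mun al i' m)) ifT; last by lia.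
  by rewrite addSn.
rewrite T2 T3 /Xn /mun mxE.
set T := (i + j + al + k).+1.
have E : (i.+1 + j.+1 - 1 + al = (i+j+al).+1)%N by lia.
rewrite E /=.
have -> : ((i+j+al).+1 + k = T)%N by rewrite /T; lia.
have -> : ((i + k).+1 + j.+1 - 1 + al = T)%N by rewrite /T; lia.
have -> : (i.+1 + (j + k).+1 - 1 + al = T)%N by rewrite /T; lia.
have -> : (i.+1 + j.+1 - 1 + (al + k) = T)%N by rewrite /T; lia.
case: (leqP T n) => hT; last first.
  by rewrite ucoord0 // !mulr0; repeat case: ifP => _; rewrite ?mulr0 ?subr0.
rewrite ifT; last by rewrite /T in hT; lia.
rewrite ifT; last by rewrite /T in hT; lia.
rewrite ifT; last by rewrite /T in hT; lia.
rewrite ifT; last by rewrite /T in hT; lia.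
rewrite /eX /cm /pnka.
ring.
Qed.

Lemma mderiv1 (l : 'I_n) : mderiv l (1 : F) = 0.
Proof. by rewrite -mpolyC1 mderivC. Qed.

Lemma lie_g_entry (i j : 'I_n) : lie (Xk R n k) (gmetric R n) i j = 0.
Proof.
rewrite [lie _ _ _ _]mxE !sumrB.
rewrite [X in X - _ - _]big1; last first.
  by move=> l _; rewrite mxE; case: ifP => _; rewrite ?mderiv1 ?mderiv0 mulr0.
have T2 : forall (i j : 'I_n), \sum_(l < n) gmetric R n l j * mderiv l (Xk R n k i) =
   if (i.+1 <= n-k)%N then (eX i)%:~R * (if ((i+k).+1 + j.+1 == n.+1)%N then 1 else 0) else 0.
  move=> i' j'; rewrite XkE /Xn; case: ifP => hi; last first.
    by rewrite big1 // => l _; rewrite mderiv0 mulr0.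
  under eq_bigr do rewrite mderivMz mulrCA mxE.
  rewrite -mulr_sumr (sum_du (fun m => if (m.+1 + j'.+1 == n.+1)%N then 1 else 0)) ifT; last by lia.
  by rewrite addSn.
have T3 : forall (i j : 'I_n), \sum_(l < n) gmetric R n i l * mderiv l (Xk R n k j) =
   if (j.+1 <= n-k)%N then (eX j)%:~R * (if (i.+1 + (j+k).+1 == n.+1)%N then 1 else 0) else 0.
  move=> i' j'; rewrite XkE /Xn; case: ifP => hi; last first.
    by rewrite big1 // => l _; rewrite mderiv0 mulr0.
  under eq_bigr do rewrite mderivMz mulrCA mxE.
  rewrite -mulr_sumr (sum_du (fun m => if (i'.+1 + m.+1 == n.+1)%N then 1 else 0)) ifT; last by lia.
  by rewrite addSn.
rewrite T2 T3.
case h: ((i + j + k).+1 == n)%N.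
  rewrite ifT; last by lia.
  rewrite ifT; last by lia.
  rewrite ifT; last by lia.
  rewrite ifT; last by lia.
  have Z : (eX i + eX j = 0)%R by rewrite /eX; lia.
  by rewrite !mulr1 sub0r -opprD -intrD Z oppr0.
rewrite (_ : ((i + k).+1 + j.+1 == n.+1)%N = false); last by lia.
rewrite (_ : (i.+1 + (j + k).+1 == n.+1)%N = false); last by lia.
by repeat case: ifP => _; rewrite ?mulr0 ?subr0.
Qed.

Lemma lie_scale (X : vfield R n) (z : int) (P : bivector R n) :
  lie X ((z%:~R : F) *: P) = (z%:~R : F) *: lie X P.
Proof.
apply/matrixP => i j; rewrite !mxE mulr_sumr; apply: eq_bigr => l _.
rewrite !mxE !mderivMz; ring.
Qed.

Lemma lie_mu al : lie (Xk R n k) (mu R n al) = ((pnka n k al)%:~R : F) *: mu R n (al + k).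
Proof. by apply/matrixP => i j; rewrite lie_mu_entry [RHS]mxE. Qed.

End M.

Theorem lemma3 (R : realType) (n : nat) (hn : (3 <= n)%N)
  (k : nat) (hk1 : (1 <= k)%N) (hk2 : (k <= n - 2)%N) (alpha : nat) :
  [/\ lie (Xk R n k) (gmetric R n) = 0,
      lie (Xk R n k) (mu R n alpha)
        = ((pnka n k alpha)%:~R : field R n) *: mu R n (alpha + k)
    & forall m : nat, (1 <= m)%N ->
        iter m (lie (Xk R n k)) (mu R n alpha)
        = ((\prod_(s < m) (pnka n k alpha - 2 * k%:Z * s%:Z))%:~R : field R n)
            *: mu R n (alpha + m * k)].
Proof.
split.
- by apply/matrixP => i j; rewrite lie_g_entry // mxE.
- exact: lie_mu.
move=> m _; elim: m => [|m IH].
  by rewrite big_ord0 /= mulr1z scale1r mul0n addn0.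
rewrite iterS IH lie_scale lie_mu // scalerA -intrM big_ord_recr /=.
have -> : (alpha + m * k + k = alpha + m.+1 * k)%N by rewrite mulSn; lia.
congr (_%:~R *: _); congr (_ * _).
rewrite /pnka; nia.
Qed.
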